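(* Let $G$ be a non-chordal graph, $H$ a hole of $G$, and $S$ the equivalence class of $\sim_G$ containing $V(H)$. Let $u,v$ be two nonadjacent vertices of $H$. If $G+uv$ has a hole $H^*$ that is not a hole of $G$, then $V(H^* )\subseteq S$.
   Context: All graphs are finite and simple. A hole of $G$ is an induced cycle of length at least $4$; $G$ is chordal if it has no hole. $\mathcal H(G)$ is the set of holes of $G$ and $\Omega(G)=\bigcup_{H\in\mathcal H(G)}V(H)$. The relation $\sim_G$ on $\Omega(G)$ is defined by $x\sim_G y$ iff $x,y$ lie on a common hole, or there is a sequence $H_1,\dots,H_t$ of distinct holes of $G$ with $x\in V(H_1)$, $y\in V(H_t)$ and $H_i,H_{i+1}$ sharing a vertex for each $i$; it is an equivalence relation and the vertex set of each hole lies in a single class. *)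

(* Defs.v *)
From mathcomp Require Import all_boot.
Set Implicit Arguments. Unset Strict Implicit. Unset Printing Implicit Defensive.

Definition simple_graph (T : finType) (e : rel T) : Prop :=
  symmetric e /\ irreflexive e.

Definition add_edge (T : finType) (e : rel T) (u v : T) : rel T :=
  fun x y => [|| e x y, (x == u) && (y == v) | (x == v) && (y == u)].

(* A hole of G: an induced cycle of length >= 4, given by the cyclic
   sequence s of its (distinct) vertices: two vertices of s are adjacent
   in G iff they are cyclically consecutive in s. *)
Definition is_hole (T : finType) (e : rel T) (s : seq T) : Prop :=
  [/\ uniq s, 4 <= size s &
      forall (x0 : T) (i j : nat), i < size s -> j < size s ->
        e (nth x0 s i) (nth x0 s j) =
        (j == i.+1 %% size s) || (i == j.+1 %% size s)].

(* x ~_G y : there is a sequence of holes H1 (= H0 below), ..., Ht with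
   x in H1, y in Ht and consecutive holes sharing a vertex (t = 1 is the
   case of a common hole). *)
Definition hole_equiv (T : finType) (e : rel T) (x y : T) : Prop :=
  exists (H0 : seq T) (hs : seq (seq T)),
    [/\ is_hole e H0, (forall K, K \in hs -> is_hole e K),
        x \in H0, y \in last H0 hs &
        path (fun A B : seq T => has (fun z => z \in B) A) H0 hs].

(* Main.v *)
Require Import Defs.
From mathcomp Require Import all_boot.
From mathcomp Require Import zify.
From Stdlib Require Import Classical.
Set Implicit Arguments. Unset Strict Implicit. Unset Printing Implicit Defensive.

Lemma modS_small x m : x < m -> x.+1 %% m = if x.+1 == m then 0 else x.+1.
Proof.
move=> h; case: eqP => [->|ne]; first by rewrite modnn.
rewrite modn_small //; lia.
Qed.

Definition walkin (T:finType) (e: rel T) (X : T -> Prop) (f : nat -> T) (L : nat) :=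
  (forall t, t < L -> e (f t) (f t.+1)) /\ (forall t, t <= L -> X (f t)).

Definition ipath (T:finType) (e: rel T) (g : nat -> T) (L : nat) :=
  forall t t', t <= L -> t' <= L -> (g t = g t' -> t = t') /\ e (g t) (g t') = (t' == t.+1) || (t == t'.+1).

Lemma induced_walk (T:finType) (e: rel T) X : simple_graph e -> forall L f, walkin e X f L ->
  exists L' g, [/\ walkin e X g L', g 0 = f 0, g L' = f L & ipath e g L'].
Proof.
move=> [esymm eirr]; elim/ltn_ind => L IH f [wE wX].
case: (classic (exists t, t < L /\ f t = f L)) => [[t [tL ft]]|Na].
  have [L' [g [w1 g0 gL gi]]] := IH t tL f (conj (fun u hu => wE u (ltn_trans hu tL))
      (fun u hu => wX u (leq_trans hu (ltnW tL)))).
  by exists L', g; split => //; rewrite gL.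
case: (classic (exists t t', [/\ t.+1 < t', t' <= L & e (f t) (f t')])) => [[t [t' [h1 h2 h3]]]|Nb].
  pose d := t' - t.+1.
  pose g u := if u <= t then f u else f (u + d).
  have dL : L - d < L by rewrite /d; lia.
  have W : walkin e X g (L - d).
    split => u hu; rewrite /g.
      case: (leqP u t) => h; case: (leqP u.+1 t) => h'.
      - by apply: wE; lia.
      - have -> : u = t by lia.
        by have -> : t.+1 + d = t' by rewrite /d; lia.
      - lia.
      - rewrite addSn; apply: wE; rewrite /d; lia.
    by case: (leqP u t) => h; apply: wX; rewrite /d; lia.
  have [L' [g' [w1 g0 gL gi]]] := IH _ dL g W.
  exists L', g'; split => //.
  rewrite gL /g; case: leqP => h; first by (exfalso; rewrite /d in h; lia).
  congr f; rewrite /d; lia.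
exists L, f; split => //.
have inj : forall a b, a < b -> b <= L -> f a <> f b.
  move=> a b ab bL fab; case: (ltngtP b L) => hb.
  - apply: Nb; exists a, b.+1; split; [lia|lia|rewrite fab; apply: wE; lia].
  - lia.
  - by apply: Na; exists a; split; [lia| rewrite fab hb].
have chord : forall a b, a < b -> b <= L -> e (f a) (f b) = (b == a.+1).
  move=> a b ab bL; case: eqP => [->|ne]; first by apply: wE; lia.
  apply/negbTE/negP => hab; apply: Nb; exists a, b; split => //; lia.
move=> t t' ht ht'; case: (ltngtP t t') => h.
- split; first by move=> /(inj _ _ h ht').
  rewrite chord //; lia.
- split; first by move=> /esym /(inj _ _ h ht).
  rewrite esymm chord //; lia.
- subst t'; split => //; rewrite eirr; lia.
Qed.

Lemma hole_of_path (T:finType) (e: rel T) (g: nat -> T) L w :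
  simple_graph e -> ipath e g L ->
  g 0 <> g L -> ~~ e (g 0) (g L) ->
  (forall t, t <= L -> w <> g t) ->
  (forall t, t <= L -> e w (g t) = (t == 0) || (t == L)) ->
  is_hole e (w :: mkseq g L.+1).
Proof.
move=> [esymm eirr] gi g0L ng wn wa.
have L2 : 1 < L.
  case: L gi g0L ng wn wa => [|[|L]] gi g0L ng *; [done| |done].
  by rewrite (proj2 (gi 0 1 isT isT)) in ng.
split.
- rewrite cons_uniq; apply/andP; split.
    apply/negP => /(nthP w) [j]; rewrite size_mkseq => hj.
    rewrite nth_mkseq // => /esym; apply: wn; lia.
  apply/mkseq_uniqP => i j; rewrite !inE => hi hj.
  apply: (proj1 (gi _ _ _ _)); rewrite /gtn /= in hi hj; lia.
- rewrite /= size_map size_iota; lia.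
- have -> : size (w :: mkseq g L.+1) = L.+2 by rewrite /= size_map size_iota.
  move=> x0 i j hi hj.
  case: i hi => [|i] hi; case: j hj => [|j] hj /=.
  + rewrite eirr modn_small //.
  + rewrite nth_mkseq; last lia.
    rewrite wa; last lia.
    rewrite (modn_small (_ : 1 < L.+2)) // modS_small; last lia.
    case: ifP => Hc; lia.
  + rewrite nth_mkseq; last lia.
    rewrite esymm wa; last lia.
    rewrite (modn_small (_ : 1 < L.+2)) // modS_small; last lia.
    case: ifP => Hc; lia.
  + rewrite !nth_mkseq; try lia.
    rewrite (proj2 (gi _ _ _ _)); try lia.
    rewrite !modS_small; try lia.
    case: (altP (i.+2 =P L.+2)) => Hc; case: (altP (j.+2 =P L.+2)) => Hd; lia.
Qed.
Lemma modSm a m : (a %% m).+1 %% m = a.+1 %% m.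
Proof. by rewrite -[(a %% m).+1]addn1 -[a.+1]addn1 modnDml. Qed.

Lemma hole_rot (T:finType) (R: rel T) (S: seq T) (x0:T) iz : is_hole R S -> iz < size S ->
  (forall x y, R (nth x0 S ((iz + x) %% size S)) (nth x0 S ((iz + y) %% size S)) =
     (y %% size S == x.+1 %% size S) || (x %% size S == y.+1 %% size S)) /\
  (forall x y, (nth x0 S ((iz + x) %% size S) == nth x0 S ((iz + y) %% size S)) = (x %% size S == y %% size S)) /\
  (forall z, z \in S -> exists2 t, t < size S & nth x0 S ((iz + t) %% size S) = z).
Proof.
move=> [hu hs hadj] hiz; set m := size S.
have m0 : 0 < m by rewrite /m; lia.
split; [|split].
- move=> x y; rewrite hadj ?ltn_pmod //. rewrite !modSm -!addnS.
  by rewrite !eqn_modDl.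
- move=> x y; rewrite nth_uniq ?ltn_pmod //.
  by rewrite eqn_modDl.
- move=> z zS; exists ((index z S + (m - iz)) %% m); first by rewrite ltn_pmod.
  rewrite modnDmr addnA (addnC iz) -addnA subnKC; last by lia.
  by rewrite modnDr modn_small ?index_mem // nth_index.
Qed.


Definition wcat (T : Type) (f1 f2 : nat -> T) L1 := fun t => if t <= L1 then f1 t else f2 (t - L1).

Lemma walk_cat (T:finType) (e: rel T) X f1 L1 f2 L2 :
  walkin e X f1 L1 -> walkin e X f2 L2 -> f1 L1 = f2 0 -> walkin e X (wcat f1 f2 L1) (L1 + L2).
Proof.
move=> [e1 x1] [e2 x2] h; split => t ht; rewrite /wcat.
  case: (leqP t.+1 L1) => h1.
    by rewrite (ltnW h1); apply: e1.
  case: (leqP t L1) => h2.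
    have -> : t = L1 by lia.
    by rewrite h subSnn; apply: e2; lia.
  rewrite subSn; last lia.
  apply: e2; lia.
case: (leqP t L1) => h1; [apply: x1 | apply: x2]; lia.
Qed.

Lemma wcat0 (T : Type) (f1 f2 : nat -> T) L1 : wcat f1 f2 L1 0 = f1 0.
Proof. by rewrite /wcat leq0n. Qed.

Lemma wcatE (T : Type) (f1 f2 : nat -> T) L1 L2 : f1 L1 = f2 0 -> wcat f1 f2 L1 (L1 + L2) = f2 L2.
Proof.
move=> h; rewrite /wcat; case: leqP => h1.
  have -> : L2 = 0 by lia.
  by rewrite addn0.
by rewrite addKn.
Qed.

Lemma mem_mkseq_ (T : eqType) (g : nat -> T) L t : t <= L -> g t \in mkseq g L.+1.
Proof. move=> ht; rewrite /mkseq; apply/mapP; exists t => //; rewrite mem_iota; lia. Qed.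

Lemma toolM (T:finType) (e: rel T) (X: T -> Prop) f L w :
  simple_graph e -> walkin e X f L -> f 0 <> f L -> ~~ e (f 0) (f L) ->
  (forall x, X x -> x <> w /\ (e w x -> x = f 0 \/ x = f L)) -> e w (f 0) -> e w (f L) ->
  exists L' g, [/\ is_hole e (w :: mkseq g L'.+1), g 0 = f 0, g L' = f L & walkin e X g L'].
Proof.
move=> sg wf n0L ne Xw w0 wL.
have [L' [g [wg g0 gL gi]]] := induced_walk sg wf.
exists L', g; split => //.
apply: hole_of_path => //; try by rewrite g0 gL.
- move=> t ht hw; apply: (proj1 (Xw _ (proj2 wg t ht))); by rewrite hw.
- move=> t ht; apply/idP/idP.
    move=> /(proj2 (Xw _ (proj2 wg t ht))) [h|h].
      have -> : t = 0 by apply: (proj1 (gi t 0 ht (leq0n _))); rewrite h g0.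
      done.
    have -> : t = L' by apply: (proj1 (gi t L' ht (leqnn _))); rewrite h gL.
    by rewrite eqxx orbT.
  by case/orP => /eqP ->; rewrite ?g0 ?gL.
Qed.

Lemma caseA (T:finType) (e: rel T) (H: seq T) (p: nat -> T) k i (phi : nat -> T) L :
  simple_graph e -> ipath e p k -> 3 <= k -> 0 < i -> i < k -> ~~ e (p i) (p 0) -> p i \notin H ->
  phi 0 = p 0 -> phi L = p k ->
  (forall t, t < L -> e (phi t) (phi t.+1)) ->
  (forall t, t <= L -> phi t \in H /\ (e (p i) (phi t) -> phi t = p 0 \/ phi t = p k)) ->
  exists K, [/\ is_hole e K, p i \in K & has (fun z => z \in H) K].
Proof.
move=> sg pI k3 i0 ik nw0 wH.
have pinj : forall l l', l <= k -> l' <= k -> p l = p l' -> l = l' :=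
  fun l l' hl hl' => proj1 (pI l l' hl hl').
have pe : forall l l', l <= k -> l' <= k -> e (p l) (p l') = (l' == l.+1) || (l == l'.+1) :=
  fun l l' hl hl' => proj2 (pI l l' hl hl').
pose w := p i.
  move=> phi0 phiL phie phiX.
pose X1 := fun x => (x \in H \/ exists l, l <= k /\ p l = x) /\ (x <> w /\ (e w x -> x = p i.-1 \/ x = p i.+1)).
have X1p : forall l, l <= k -> l != i -> X1 (p l).
  move=> l lk li; split; first by right; exists l.
  split; first by move=> /(pinj _ _ lk (ltnW ik)) /eqP; rewrite (negbTE li).
  rewrite /w pe //; last lia.
  by case/orP => /eqP h; [right; rewrite h | left; rewrite h].
have X1H : forall x, x \in H -> (e w x -> x = p 0 \/ x = p k) -> X1 x.
  move=> x xH hx; split; first by left.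
  split; first by move=> hxw; move: wH; rewrite -/w -hxw xH.
  move=> ex; case: (hx ex) => hx'; subst x.
    by rewrite ex in nw0.
  right; move: ex; rewrite /w pe //; last lia.
  by case/orP => /eqP h; [rewrite h | lia].
pose f1 := fun t => p (i.-1 - t).
pose f3 := fun t => p (k - t).
have w1 : walkin e X1 f1 i.-1.
  split => t ht; first by rewrite /f1 pe; lia.
  by apply: X1p; lia.
have w2 : walkin e X1 phi L.
  split => t ht; first exact: phie.
  by case: (phiX t ht) => h1 h2; apply: X1H.
have w3 : walkin e X1 f3 (k - i.+1).
  split => t ht; first by rewrite /f3 pe; lia.
  by apply: X1p; lia.
have c1 : f1 i.-1 = phi 0 by rewrite /f1 subnn phi0.
have w12 := @walk_cat T e X1 f1 i.-1 phi L w1 w2 c1.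
have c2 : wcat f1 phi i.-1 (i.-1 + L) = f3 0 by rewrite wcatE // /f3 subn0.
have w123 := @walk_cat T e X1 _ _ f3 (k - i.+1) w12 w3 c2.
set F := wcat _ _ _ in w123.
have F0 : F 0 = p i.-1 by rewrite /F !wcat0 /f1 subn0.
have FT : F (i.-1 + L + (k - i.+1)) = p i.+1 by rewrite /F wcatE // /f3; congr p; lia.
have [|||||L' [g [hK g0 gL wg]]] := @toolM T e X1 F _ w sg w123.
- rewrite F0 FT => /pinj; lia.
- by rewrite F0 FT pe; lia.
- move=> x [_ [h1 h2]]; split => //; by rewrite F0 FT.
- by rewrite F0 /w pe; lia.
- by rewrite FT /w pe; lia.
have [t [ht gtH]] : exists t, t <= L' /\ g t \in H.
  apply: NNPP => nex.
  have inv : forall t, t <= L' -> exists l, l < i /\ g t = p l.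
    elim => [_|t IH ht].
      by exists i.-1; split; [lia | rewrite g0 F0].
    have [l [li gl]] := IH (ltnW ht).
    have [[gH|[l' [l'k gl']]] [gw _]] := (proj2 wg) t.+1 ht.
      by exfalso; apply: nex; exists t.+1.
    exists l'; split => //.
    have he := (proj1 wg) t ht.
    rewrite gl -gl' pe in he; try lia.
    have l'i : l' != i by apply/eqP => h; apply: gw; rewrite -gl' h.
    lia.
  have [l [li gl]] := inv L' (leqnn _).
  move: gl; rewrite gL FT => /pinj; lia.
exists (w :: mkseq g L'.+1); split => //; first by rewrite inE eqxx.
apply/hasP; exists (g t) => //.
by rewrite inE; apply/orP; right; apply: mem_mkseq_.
Qed.

Lemma caseA' (T:finType) (e: rel T) (H: seq T) (p: nat -> T) k i (phi : nat -> T) L :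
  simple_graph e -> ipath e p k -> 3 <= k -> 0 < i -> i < k -> ~~ e (p i) (p 0) -> p i \notin H ->
  phi 0 = p 0 -> phi L = p k ->
  (forall t, t < L -> e (phi t) (phi t.+1)) -> (forall t, phi t \in H) ->
  (forall t, 0 < t -> t < L -> ~~ e (p i) (phi t)) ->
  exists K, [/\ is_hole e K, p i \in K & has (fun z => z \in H) K].
Proof.
move=> sg pI k3 i0 ik nw0 wH phi0 phiL phie phiH phim.
apply: (@caseA T e H p k i phi L sg pI k3 i0 ik nw0 wH phi0 phiL phie) => t ht; split => // ew.
case: (posnP t) => [t0|t0]; first by left; rewrite t0.
case: (ltngtP t L) => htL.
- by move: ew; rewrite (negbTE (phim t t0 htL)).
- lia.
- by right; rewrite htL.
Qed.

Lemma caseB (T:finType) (e: rel T) (H: seq T) w (g: nat -> T) L :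
  simple_graph e -> w \notin H -> walkin e (fun x => x \in H) g L ->
  g 0 <> g L -> ~~ e (g 0) (g L) -> e w (g 0) -> e w (g L) ->
  (forall t, t <= L -> e w (g t) -> g t = g 0 \/ g t = g L) ->
  exists K, [/\ is_hole e K, w \in K & has (fun z => z \in H) K].
Proof.
move=> sg wH [ge gH] n0L ne w0 wL gadj.
pose X2 := fun x => x \in H /\ (e w x -> x = g 0 \/ x = g L).
have wX : walkin e X2 g L.
  split => // t ht; split; [exact: gH | exact: gadj].
have [|||||L' [g' [hK g0 gL' wg]]] := @toolM T e X2 g L w sg wX => //.
  move=> x [xH hx]; split => // hxw; move: wH; by rewrite -hxw xH.
exists (w :: mkseq g' L'.+1); split => //; first by rewrite inE eqxx.
apply/hasP; exists (g' 0); last exact: (proj1 (proj2 wg 0 (leq0n _))).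
by rewrite inE; apply/orP; right; apply: mem_mkseq_.
Qed.

Lemma caseB' (T:finType) (e: rel T) (H: seq T) w (hh : nat -> T) m s r :
  simple_graph e -> w \notin H ->
  (forall a b, (hh a == hh b) = (a %% m == b %% m)) ->
  (forall a b, e (hh a) (hh b) = (b %% m == a.+1 %% m) || (a %% m == b.+1 %% m)) ->
  (forall t, hh t \in H) -> ~~ e w (hh 0) ->
  0 < s -> 0 < r -> s.+1 < m - r -> r < m ->
  (forall t, 0 < t -> t < s -> ~~ e w (hh t)) ->
  (forall t, 0 < t -> t < r -> ~~ e w (hh (m - t))) ->
  e w (hh s) -> e w (hh (m - r)) ->
  exists K, [/\ is_hole e K, w \in K & has (fun z => z \in H) K].
Proof.
move=> sg wH hI hR hhH nz s0 r0 srm rm smin rmin ws wr.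
have hheq : forall a b, a %% m = b %% m -> hh a = hh b by move=> a b h; apply/eqP; rewrite hI h.
pose g := fun t => hh (m - r + t).
have g0 : g 0 = hh (m - r) by rewrite /g addn0.
have gL : g (r + s) = hh s.
  apply: hheq; rewrite (_ : m - r + (r + s) = s + m); last by lia.
  by rewrite modnDr.
apply: (@caseB T e H w g (r + s) sg wH).
- split => t ht; [by rewrite /g /= addnS hR eqxx | exact: hhH].
- rewrite g0 gL => /eqP; rewrite hI !modn_small; lia.
- rewrite g0 gL hR (modn_small (_ : s < m)); last by lia.
  rewrite (modn_small (_ : m - r < m)); last by lia.
  rewrite (modn_small (_ : s.+1 < m)); last by lia.
  rewrite modS_small; last by lia.
  by case: (altP ((m - r).+1 =P m)) => h2; lia.
- by rewrite g0.
- by rewrite gL.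
move=> t ht ew.
case: (posnP t) => [t0|t0]; first by left; rewrite t0.
case: (ltngtP t (r + s)) => htL; last by right; rewrite htL.
  case: (ltngtP t r) => htr.
  - exfalso; move: ew; rewrite /g (_ : m - r + t = m - (r - t)); last by lia.
    by rewrite (negbTE (rmin (r - t) _ _)); lia.
  - exfalso; move: ew; rewrite /g (hheq _ (t - r)).
      by rewrite (negbTE (smin (t - r) _ _)); lia.
    by rewrite (_ : m - r + t = t - r + m); [rewrite modnDr | lia].
  - exfalso; move: ew; rewrite /g (hheq _ 0); first by rewrite (negbTE nz).
    by rewrite htr subnK ?modnn ?mod0n //; lia.
lia.
Qed.

Lemma core (T:finType) (e: rel T) (H: seq T) (p: nat -> T) k i (x0: T) :
  simple_graph e -> is_hole e H -> 3 <= k -> ipath e p k ->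
  p 0 \in H -> p k \in H -> 0 < i -> i < k -> ~~ e (p i) (p 0) -> p i \notin H ->
  exists K, [/\ is_hole e K, p i \in K & has (fun z => z \in H) K].
Proof.
move=> sg hH k3 pI p0H pkH i0 ik nw0 wH.
have pinj : forall l l', l <= k -> l' <= k -> p l = p l' -> l = l' :=
  fun l l' hl hl' => proj1 (pI l l' hl hl').
have m4 : 4 <= size H by case: hH.
have hiz : index (p 0) H < size H by rewrite index_mem.
have [hR [hI hS]] := hole_rot x0 hH hiz.
move: hR hI hS.
set m := size H; set iz := index (p 0) H.
pose hh := fun t => nth x0 H ((iz + t) %% m).
move=> hR hI hS.
have {}hR : forall a b, e (hh a) (hh b) = (b %% m == a.+1 %% m) || (a %% m == b.+1 %% m) := hR.
have {}hI : forall a b, (hh a == hh b) = (a %% m == b %% m) := hI.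
have {}hS : forall z, z \in H -> exists2 t, t < m & hh t = z := hS.
have m0 : 0 < m by apply: leq_trans m4.
have hhH : forall t, hh t \in H by move=> t; rewrite /hh mem_nth // ltn_pmod.
pose w := p i.
have hh0 : hh 0 = p 0 by rewrite /hh addn0 modn_small // nth_index.
have hheq : forall a b, a %% m = b %% m -> hh a = hh b by move=> a b h; apply/eqP; rewrite hI h.
have hhm : hh m = p 0 by rewrite -hh0; apply: hheq; rewrite modnn mod0n.
have hedge : forall t, e (hh t) (hh t.+1) by move=> t; rewrite hR eqxx.
have [ty tym hty] := hS _ pkH.
have ty0 : 0 < ty.
  case: ty tym hty => // _ h.
  have : 0 = k by apply: pinj => //; rewrite -hh0 h.
  by move=> k0; rewrite -k0 in k3.
have exF : exists t, [&& 0 < t, t < m & e w (hh t) || (hh t == p k)].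
  by exists ty; rewrite ty0 tym hty eqxx orbT.
have tyB : [&& 0 < m - ty, m - ty < m & e w (hh (m - (m - ty))) || (hh (m - (m - ty)) == p k)].
  rewrite subKn; last exact: ltnW.
  by rewrite hty eqxx orbT andbT subn_gt0 tym /= ltn_subrL ty0 m0.
have exB : exists t, [&& 0 < t, t < m & e w (hh (m - t)) || (hh (m - t) == p k)].
  by exists (m - ty).
case: (ex_minnP exF) => s /and3P [s0 sm hs] smin.
case: (ex_minnP exB) => r /and3P [r0 rm hr] rmin.
case: (boolP (hh s == p k)) => hsk.
  apply: (@caseA' T e H p k i hh s sg pI k3 i0 ik nw0 wH hh0 (eqP hsk) (fun t _ => hedge t) hhH).
  move=> t t0 ts; apply/negP => ew; have := smin t.
  by rewrite t0 ew (ltn_trans ts sm) /= leqNgt ts => /(_ isT).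
case: (boolP (hh (m - r) == p k)) => hrk.
  apply: (@caseA' T e H p k i (fun t => hh (m - t)) r sg pI k3 i0 ik nw0 wH) => //=.
  - by rewrite subn0 hhm.
  - exact: eqP hrk.
  - move=> t tr; rewrite hR subnSK; last exact: ltn_trans tr rm.
    by rewrite eqxx orbT.
  - move=> t t0 tr; apply/negP => ew; have := rmin t.
    by rewrite t0 ew (ltn_trans tr rm) /= leqNgt tr => /(_ isT).
have ws : e w (hh s) by move: hs; rewrite (negbTE hsk) orbF.
have wr : e w (hh (m - r)) by move: hr; rewrite (negbTE hrk) orbF.
have sty : s <= ty by apply: smin; rewrite ty0 tym hty eqxx orbT.
have sty' : s != ty by apply/eqP => h; move: hsk; rewrite h hty eqxx.
have rty : r <= m - ty by apply: rmin.
have rty' : r != m - ty.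
  by apply/eqP => h; move: hrk; rewrite h subKn ?hty ?eqxx // ltnW.
have srm : s.+1 < m - r by clear -sty sty' rty rty' tym; lia.
apply: (@caseB' T e H w hh m s r sg wH hI hR hhH) => //.
- by rewrite hh0.
- move=> t t0 ts; apply/negP => ew; have := smin t.
  by rewrite t0 ew (ltn_trans ts sm) /= leqNgt ts => /(_ isT).
- move=> t t0 tr; apply/negP => ew; have := rmin t.
  by rewrite t0 ew (ltn_trans tr rm) /= leqNgt tr => /(_ isT).
Qed.

Lemma ipath_rev (T:finType) (e: rel T) (p: nat -> T) k :
  ipath e p k -> ipath e (fun j => p (k - j)) k.
Proof.
move=> pI t t' ht ht'; have [h1 h2] := pI (k - t) (k - t') (leq_subr _ _) (leq_subr _ _).
split; first by move=> /h1; lia.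
by rewrite h2; lia.
Qed.

Lemma from_path (T:finType) (e: rel T) (H: seq T) (p: nat -> T) k t h (x0:T) :
  simple_graph e -> is_hole e H -> 3 <= k -> ipath e p k -> p 0 \in H -> p k \in H ->
  t <= k -> h \in H -> hole_equiv e (p t) h.
Proof.
move=> sg hH k3 pI p0H pkH tk hH'.
case: (boolP (p t \in H)) => ptH.
  by exists H, [::]; split.
have t0 : 0 < t by case: t tk ptH => //; rewrite p0H.
have tk' : t < k by case: (ltngtP t k) tk ptH => // -> _; rewrite pkH.
suff [K [hK pK hasK]] : exists K, [/\ is_hole e K, p t \in K & has (fun z => z \in H) K].
  exists K, [:: H]; split => //=; last by rewrite andbT.
  by move=> K'; rewrite inE => /eqP ->.
case: (boolP (e (p t) (p 0))) => h0; last exact: (core x0 sg hH k3 pI).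
have t1 : t = 1.
  by move: h0; rewrite (proj2 (pI t 0 tk (leq0n _))); lia.
have := core x0 sg hH k3 (ipath_rev pI) _ _ (_ : 0 < k - 1) (_ : k - 1 < k).
rewrite /= subn0 subnn (_ : k - (k - 1) = t); last by lia.
apply => //; try lia.
by rewrite (proj2 (pI t k tk (leqnn _))); lia.
Qed.

Lemma hs_path_gen (T:finType) (e R: rel T) (Hs: seq T) a b (x0:T) :
  simple_graph e -> (forall x y, R x y = [|| e x y, (x == a) && (y == b) | (x == b) && (y == a)]) ->
  is_hole R Hs -> a \in Hs -> b \in Hs -> index a Hs = (index b Hs).+1 %% size Hs -> ~~ e a b ->
  exists p k, [/\ ipath e p k, 3 <= k, p 0 = a, p k = b &
     forall x, x \in Hs -> exists2 t, t <= k & p t = x].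
Proof.
move=> [esymm eirr] Rdef hHs aH bH iab nab.
have n4 : 3 < size Hs by case: hHs.
have hia : index a Hs < size Hs by rewrite index_mem.
have hib : index b Hs < size Hs by rewrite index_mem.
have [hR [hI hS]] := hole_rot x0 hHs hia.
move: hR hI hS.
set n := size Hs; set ia := index a Hs.
pose p := fun t => nth x0 Hs ((ia + t) %% n).
move=> hR hI hS.
have {}hR : forall x y, R (p x) (p y) = (y %% n == x.+1 %% n) || (x %% n == y.+1 %% n) := hR.
have {}hI : forall x y, (p x == p y) = (x %% n == y %% n) := hI.
have {}hS : forall z, z \in Hs -> exists2 t, t < n & p t = z := hS.
have p0 : p 0 = a by rewrite /p addn0 modn_small // nth_index.
have pk : p n.-1 = b.
  rewrite /p /ia iab modS_small //.
  case: (altP ((index b Hs).+1 =P n)) => h.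
    rewrite add0n modn_small; last by lia.
    by rewrite (_ : n.-1 = index b Hs) ?nth_index //; lia.
  rewrite (_ : (index b Hs).+1 + n.-1 = index b Hs + n); last by lia.
  by rewrite modnDr modn_small // nth_index.
have pinj : forall u u', u < n -> u' < n -> (p u == p u') = (u == u').
  by move=> u u' hu hu'; rewrite hI !modn_small.
have pa : forall u, u < n -> (p u == a) = (u == 0).
  by move=> u hu; rewrite -{1}p0 pinj // /n; lia.
have pb : forall u, u < n -> (p u == b) = (u == n.-1).
  by move=> u hu; rewrite -{1}pk pinj //; lia.
exists p, n.-1; split => //; last first.
- by move=> x xH; have [t tn ht] := hS x xH; exists t => //; lia.
- lia.
move=> t t' ht ht'.
have tn : t < n by lia.
have tn' : t' < n by lia.
split; first by move=> /eqP; rewrite pinj // => /eqP.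
have E := hR t t'.
rewrite Rdef (pa t) // (pb t') // (pb t) // (pa t') // in E.
case E0: ((t == 0) && (t' == n.-1)).
  move/andP: E0 => [/eqP -> /eqP ->]; rewrite p0 pk (negbTE nab); clear -n4; lia.
case E1: ((t == n.-1) && (t' == 0)).
  move/andP: E1 => [/eqP -> /eqP ->]; rewrite p0 pk esymm (negbTE nab); clear -n4; lia.
rewrite E0 E1 !orbF in E; rewrite E.
rewrite (modn_small tn) (modn_small tn') !modS_small //.
by case: (altP (t.+1 =P n)) => h1; case: (altP (t'.+1 =P n)) => h2; clear -tn tn' h1 h2 n4 E0 E1; lia.
Qed.

Theorem proposition4p6 (T : finType) (e : rel T) (H : seq T) (u v : T)
    (Hs : seq T) :
  simple_graph e ->
  is_hole e H ->
  u \in H -> v \in H -> u != v -> ~~ e u v ->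
  is_hole (add_edge e u v) Hs ->
  ~ is_hole e Hs ->
  forall x, x \in Hs -> forall h, h \in H -> hole_equiv e x h.
Proof.
move=> sg hH uH vH uv nuv hHs nHs x xHs h hH'.
have [uHs vHs] : u \in Hs /\ v \in Hs.
  apply: NNPP => nb; apply: nHs.
  case: hHs => hu hs hadj; split => // x0 i j hi hj.
  rewrite -(hadj x0) // /add_edge.
  have -> : (nth x0 Hs i == u) && (nth x0 Hs j == v) = false.
    apply/negbTE/negP => /andP [/eqP h1 /eqP h2]; apply: nb.
    by rewrite -h1 -h2 !mem_nth.
  have -> : (nth x0 Hs i == v) && (nth x0 Hs j == u) = false.
    apply/negbTE/negP => /andP [/eqP h1 /eqP h2]; apply: nb.
    by rewrite -h1 -h2 !mem_nth.
  by rewrite !orbF.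
have [_ _ hadj] := hHs.
have E := hadj u (index u Hs) (index v Hs).
rewrite !index_mem !nth_index // /add_edge !eqxx orbT in E.
have {E} := esym (E uHs vHs).
case/orP => /eqP hi.
- have [p [k [pI k3 p0 pk surj]]] := @hs_path_gen T e (add_edge e u v) Hs v u x sg
    (fun y z => ltac:(rewrite /add_edge; congr (_ || _); exact: orbC)) hHs vHs uHs hi
    (ltac:(by rewrite (proj1 sg))).
  have [t tk <-] := surj x xHs.
  by apply: (from_path x sg hH k3 pI) => //; rewrite ?p0 ?pk.
- have [p [k [pI k3 p0 pk surj]]] := @hs_path_gen T e (add_edge e u v) Hs u v x sg
    (fun y z => erefl) hHs uHs vHs hi nuv.
  have [t tk <-] := surj x xHs.
  by apply: (from_path x sg hH k3 pI) => //; rewrite ?p0 ?pk.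
Qed.
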